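(* Let $(X,d)$ be a compact metric space and $f\in\mathcal{H}(X)$. If $\dim X=0$ and every point of $X$ is a periodic point of $f$ (i.e. $X=Per(f)$), then $f$ is equicontinuous and has the strict periodic shadowing property.
   Context: Equicontinuous: for every $\epsilon>0$ there is $\delta>0$ with $d(x,y)\le\delta\Rightarrow\sup_{i\in\mathbb{Z}}d(f^i(x),f^i(y))\le\epsilon$. Strict periodic shadowing property: for every $\epsilon>0$ there is $\delta>0$ such that for every $(x_i)_{i=0}^m$, $m\ge1$, with $d(f(x_i),x_{i+1})\le\delta$ for $0\le i<m$ and $x_0=x_m$, there is $p\in X$ with $f^m(p)=p$ and $d(x_i,f^i(p))\le\epsilon$ for $0\le i\le m$. *)

(* Defs.v *)
From Stdlib Require Import Reals List ZArith.
Open Scope R_scope.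

Record MetricSpace := {
  carrier :> Type;
  dist : carrier -> carrier -> R;
  dist_nonneg : forall x y, 0 <= dist x y;
  dist_sym : forall x y, dist x y = dist y x;
  dist_zero : forall x y, dist x y = 0 <-> x = y;
  dist_triangle : forall x y z, dist x z <= dist x y + dist y z
}.

Section MS.
Context {X : MetricSpace}.

Definition is_open (U : X -> Prop) : Prop :=
  forall x, U x -> exists r, 0 < r /\ forall y, dist X x y < r -> U y.

Definition is_closed (F : X -> Prop) : Prop := is_open (fun x => ~ F x).

Definition compact_space : Prop :=
  forall (I : Type) (U : I -> X -> Prop),
    (forall i, is_open (U i)) -> (forall x, exists i, U i x) ->
    exists l : list I, forall x, exists i, In i l /\ U i x.

(* Small inductive dimension 0 (dim X <= 0): X has a base of clopen sets. *)
Definition dim_zero : Prop :=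
  forall (x : X) (eps : R), 0 < eps ->
    exists U : X -> Prop, is_open U /\ is_closed U /\ U x /\
      forall y, U y -> dist X x y < eps.

Definition continuous (f : X -> X) : Prop :=
  forall x eps, 0 < eps -> exists delta, 0 < delta /\
    forall y, dist X x y < delta -> dist X (f x) (f y) < eps.

Definition is_homeomorphism (f finv : X -> X) : Prop :=
  continuous f /\ continuous finv /\
  (forall x, finv (f x) = x) /\ (forall x, f (finv x) = x).

Definition zpow (f finv : X -> X) (i : Z) (x : X) : X :=
  match i with
  | Z0 => x
  | Zpos p => Nat.iter (Pos.to_nat p) f x
  | Zneg p => Nat.iter (Pos.to_nat p) finv x
  end.

Definition periodic_point (f : X -> X) (x : X) : Prop :=
  exists n : nat, (1 <= n)%nat /\ Nat.iter n f x = x.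

Definition equicontinuous (f finv : X -> X) : Prop :=
  forall eps, 0 < eps -> exists delta, 0 < delta /\
    forall x y, dist X x y <= delta ->
      forall i : Z, dist X (zpow f finv i x) (zpow f finv i y) <= eps.

Definition strict_periodic_shadowing (f : X -> X) : Prop :=
  forall eps, 0 < eps -> exists delta, 0 < delta /\
    forall (xs : nat -> X) (m : nat), (1 <= m)%nat ->
      (forall i, (i < m)%nat -> dist X (f (xs i)) (xs (S i)) <= delta) ->
      xs 0%nat = xs m ->
      exists p : X, Nat.iter m f p = p /\
        forall i, (i <= m)%nat -> dist X (xs i) (Nat.iter i f p) <= eps.

End MS.

(* Main.v *)
Require Import Defs.
From Stdlib Require Import Reals List ZArith Lra Lia Classical Arith.
Open Scope R_scope.

Section Gen.
Variable X : MetricSpace.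
Notation d := (Defs.dist X).

Definition clopen (S : X -> Prop) := @is_open X S /\ @is_open X (fun z => ~ S z).

Lemma open_ext (S T : X -> Prop) : is_open S -> (forall z, S z <-> T z) -> is_open T.
Proof. intros H E z Tz. destruct (H z (proj2 (E z) Tz)) as [r [rp Hr]].
  exists r; split; auto. intros y Hy; apply E; auto. Qed.

Lemma open_and (S T : X -> Prop) : is_open S -> is_open T -> is_open (fun z => S z /\ T z).
Proof. intros HS HT z [Sz Tz]. destruct (HS z Sz) as [r1 [p1 H1]].
  destruct (HT z Tz) as [r2 [p2 H2]].
  exists (Rmin r1 r2). split. apply Rmin_glb_lt; auto. intros y Hy. split.
  - apply H1. eapply Rlt_le_trans; [exact Hy|apply Rmin_l].
  - apply H2. eapply Rlt_le_trans; [exact Hy|apply Rmin_r]. Qed.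

Lemma open_or (S T : X -> Prop) : is_open S -> is_open T -> is_open (fun z => S z \/ T z).
Proof. intros HS HT z [Sz|Tz].
  - destruct (HS z Sz) as [r [p H]]; exists r; split; auto.
  - destruct (HT z Tz) as [r [p H]]; exists r; split; auto. Qed.

Lemma clopen_ext (S T : X -> Prop) : clopen S -> (forall z, S z <-> T z) -> clopen T.
Proof. intros [a b] E; split. apply (open_ext S T a E).
  apply (open_ext _ _ b). intro z; simpl; rewrite (E z); tauto. Qed.

Lemma clopen_true : clopen (fun _ => True).
Proof. split. intros z _; exists 1; split; [lra|auto]. intros z H; tauto. Qed.

Lemma clopen_not (S : X -> Prop) : clopen S -> clopen (fun z => ~ S z).
Proof. intros [H1 H2]; split; auto. eapply open_ext; [exact H1|].
  intro z; split; [tauto| apply NNPP]. Qed.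

Lemma clopen_and (S T : X -> Prop) : clopen S -> clopen T -> clopen (fun z => S z /\ T z).
Proof. intros [a b] [c e]; split. apply open_and; auto.
  eapply open_ext; [apply (open_or _ _ b e)|]. intro z; cbv beta; destruct (classic (S z)); destruct (classic (T z)); tauto. Qed.

Lemma clopen_or (S T : X -> Prop) : clopen S -> clopen T -> clopen (fun z => S z \/ T z).
Proof. intros a b. apply (clopen_ext (fun z => ~ (~ S z /\ ~ T z))); [apply clopen_not, clopen_and; apply clopen_not; auto|].
  intro z; cbv beta; destruct (classic (S z)); destruct (classic (T z)); tauto. Qed.

Lemma clopen_iff (S T : X -> Prop) : clopen S -> clopen T -> clopen (fun z => S z <-> T z).
Proof. intros a b. apply (clopen_ext (fun z => (S z /\ T z) \/ (~ S z /\ ~ T z)));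
  [apply clopen_or; apply clopen_and; try apply clopen_not; auto|].
  intro z; cbv beta; destruct (classic (S z)); destruct (classic (T z)); tauto. Qed.

Lemma clopen_forall_list {I : Type} (l : list I) (F : I -> X -> Prop) :
  (forall i, In i l -> clopen (F i)) -> clopen (fun z => forall i, In i l -> F i z).
Proof. induction l as [|a l IH]; intro H.
  - eapply clopen_ext; [apply clopen_true|]. intro z; simpl; tauto.
  - eapply clopen_ext; [apply clopen_and; [apply (H a); left; auto| apply IH; intros i Hi; apply H; right; auto]|].
    intro z; simpl; split.
    + intros [h1 h2] i [<-|Hi]; auto.
    + intros h; split; auto. Qed.

Lemma clopen_forall_lt (n : nat) (F : nat -> X -> Prop) :
  (forall j, clopen (F j)) -> clopen (fun z => forall j, (j < n)%nat -> F j z).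
Proof. intro H; induction n.
  - eapply clopen_ext; [apply clopen_true|]. intro z; split; auto; intros _ j Hj; lia.
  - eapply clopen_ext; [apply (clopen_and _ _ IHn (H n))|]. intro z; split.
    + intros [h1 h2] j Hj. destruct (Nat.eq_dec j n); [subst; auto| apply h1; lia].
    + intros h; split; auto. Qed.

Lemma clopen_exists_lt (n : nat) (F : nat -> X -> Prop) :
  (forall j, clopen (F j)) -> clopen (fun z => exists j, (j < n)%nat /\ F j z).
Proof. intro H. eapply clopen_ext; [apply clopen_not, (clopen_forall_lt n (fun j z => ~ F j z)); intro j; apply clopen_not; auto|].
  intro z; split.
  - intro h; apply NNPP; intro h2; apply h; intros j Hj Fj; apply h2; eauto.
  - intros [j [Hj Fj]] h; eapply h; eauto. Qed.

Lemma open_pre (g : X -> X) (S : X -> Prop) : continuous g -> is_open S -> is_open (fun z => S (g z)).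
Proof. intros Hg HS z Sz. destruct (HS _ Sz) as [r [rp Hr]].
  destruct (Hg z r rp) as [de [dp Hd]]. exists de; split; auto. Qed.

Lemma clopen_pre (g : X -> X) (S : X -> Prop) : continuous g -> clopen S -> clopen (fun z => S (g z)).
Proof. intros Hg [a b]; split; [apply (open_pre g S); auto| apply (open_pre g (fun z => ~ S z)); auto]. Qed.

Lemma continuous_comp (g h : X -> X) : continuous g -> continuous h -> continuous (fun z => g (h z)).
Proof. intros Hg Hh x e ep. destruct (Hg (h x) e ep) as [d1 [p1 H1]].
  destruct (Hh x d1 p1) as [d2 [p2 H2]]. exists d2; split; auto. Qed.

Lemma continuous_iter (g : X -> X) n : continuous g -> continuous (Nat.iter n g).
Proof. intro Hg; induction n.
  - intros x e ep; exists e; split; auto.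
  - intros x e ep. destruct (continuous_comp g _ Hg IHn x e ep) as [de [dp H]].
    exists de; split; auto. Qed.

Lemma list_min_pos {A : Type} (w : A -> R) (l : list A) :
  (forall a, In a l -> 0 < w a) -> exists s, 0 < s /\ forall a, In a l -> s <= w a.
Proof. induction l as [|a l IH]; intro H.
  - exists 1; split; [lra| intros a []].
  - destruct IH as [s [sp Hs]]; [intros b Hb; apply H; right; auto|].
    exists (Rmin s (w a)); split. apply Rmin_glb_lt; auto; apply H; left; auto.
    intros b [<-|Hb]. apply Rmin_r. eapply Rle_trans; [apply Rmin_l| auto]. Qed.

Lemma ball_open (c : X) (r : R) : is_open (fun y => d c y < r).
Proof. intros z Hz. exists (r - d c z); split; [lra|]. intros y Hy.
  pose proof (Defs.dist_triangle X c z y). lra. Qed.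

End Gen.

Section Main.
Variable X : MetricSpace.
Notation d := (Defs.dist X).
Variable Hcomp : @compact_space X.

Lemma dist_refl (x : X) : d x x = 0.
Proof. apply (proj2 (Defs.dist_zero X x x)); auto. Qed.

Lemma cover_exists (Hdim : @dim_zero X) (eta : R) : 0 < eta -> exists L : list (X -> Prop),
  (forall U, In U L -> clopen X U) /\ (forall x, exists U, In U L /\ U x) /\
  (forall U, In U L -> forall a b, U a -> U b -> d a b < eta).
Proof. intro ep.
  set (I := {U : X -> Prop | clopen X U /\ forall a b, U a -> U b -> d a b < eta}).
  destruct (Hcomp I (fun i => proj1_sig i)) as [l Hl].
  - intros [U [[o c] D]]; exact o.
  - intro x. destruct (Hdim x (eta/2)) as [U [o [c [Ux Hd]]]]; [lra|].
    assert (D : forall a b, U a -> U b -> d a b < eta).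
    { intros a b Ua Ub. pose proof (Hd a Ua); pose proof (Hd b Ub).
      pose proof (Defs.dist_triangle X a x b). rewrite (Defs.dist_sym X a x) in H1. lra. }
    exists (exist _ U (conj (conj o c) D)); exact Ux.
  - exists (map (fun i => proj1_sig i) l). split; [|split].
    + intros U HU. apply in_map_iff in HU. destruct HU as [[V [Vc VD]] [<- _]]; exact Vc.
    + intro x. destruct (Hl x) as [i [Hi Ui]]. exists (proj1_sig i); split; auto.
      apply in_map; auto.
    + intros U HU. apply in_map_iff in HU. destruct HU as [[V [Vc VD]] [<- _]]; exact VD.
Qed.

Definition Prel (L : list (X -> Prop)) (a b : X) := forall U, In U L -> (U a <-> U b).

Lemma Prel_refl L a : Prel L a a. Proof. intros U _; tauto. Qed.
Lemma Prel_sym L a b : Prel L a b -> Prel L b a. Proof. intros H U HU; specialize (H U HU); tauto. Qed.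
Lemma Prel_trans L a b c : Prel L a b -> Prel L b c -> Prel L a c.
Proof. intros H1 H2 U HU; specialize (H1 U HU); specialize (H2 U HU); tauto. Qed.

Lemma Prel_clopen L c : (forall U, In U L -> clopen X U) -> clopen X (fun z => Prel L z c).
Proof. intro HL. apply (clopen_forall_list X L (fun U z => U z <-> U c)).
  intros U HU. apply clopen_iff; auto. destruct (classic (U c)).
  - apply (clopen_ext X (fun _ => True)); [apply clopen_true| intro; tauto].
  - apply (clopen_ext X (fun _ => ~ True)); [apply clopen_not, clopen_true| intro; tauto].
Qed.

Lemma compact_nested (A : nat -> X -> Prop) : (forall n, clopen X (A n)) ->
  (forall n u, A (S n) u -> A n u) -> (forall n, exists u, A n u) -> exists u, forall n, A n u.
Proof. intros Hc Hd Hn. apply NNPP; intro Hno.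
  destruct (Hcomp nat (fun n z => ~ A n z)) as [l Hl].
  - intro n; apply (Hc n).
  - intro x; apply NNPP; intro H; apply Hno; exists x; intro n; apply NNPP; intro H2; apply H; eauto.
  - assert (mono : forall n m, (n <= m)%nat -> forall u, A m u -> A n u).
    { intros n m Hnm; induction Hnm; auto. }
    destruct (Hn (list_max l)) as [u Hu]. destruct (Hl u) as [i [Hi Hiu]].
    apply Hiu. apply (mono i (list_max l)); auto.
    pose proof (proj1 (list_max_le l (list_max l)) (le_n _)) as F.
    rewrite Forall_forall in F; auto.
Qed.

Section OneSide.
Variables (g ginv : X -> X).
Hypotheses (Hg : continuous g) (Hgv : continuous ginv)
  (Hgi : forall x, ginv (g x) = x) (Hig : forall x, g (ginv x) = x)
  (Hper : forall x, periodic_point g x).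
Variable L : list (X -> Prop).
Hypothesis HL : forall U, In U L -> clopen X U.

Lemma iter_inv n z : Nat.iter n ginv (Nat.iter n g z) = z.
Proof. induction n; auto. rewrite Nat.iter_succ_r, Nat.iter_succ, Hgi; auto. Qed.

Lemma iter_inv2 n k z : Nat.iter n ginv (Nat.iter (n + k) g z) = Nat.iter k g z.
Proof. rewrite Nat.iter_add; apply iter_inv. Qed.

Lemma iter_shift j n u : Nat.iter (S j) g (Nat.iter (S n) ginv u) = Nat.iter j g (Nat.iter n ginv u).
Proof. rewrite Nat.iter_succ_r, Nat.iter_succ, Hig; auto. Qed.

Lemma iter_period q x m : Nat.iter q g x = x -> Nat.iter (q * m) g x = x.
Proof. intro H; induction m. rewrite Nat.mul_0_r; auto.
  rewrite Nat.mul_succ_r, Nat.iter_add, H; auto. Qed.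

Lemma least_nat (Q : nat -> Prop) : (exists n, Q n) -> exists n, Q n /\ forall m, (m < n)%nat -> ~ Q m.
Proof. intros [n Hn]. induction n as [n IH] using (well_founded_induction lt_wf).
  destruct (classic (exists m, (m < n)%nat /\ Q m)) as [[m [Hm Qm]]|Hno].
  - exact (IH m Hm Qm).
  - exists n; split; auto. intros m Hm Qm; apply Hno; eauto. Qed.

Lemma one_side x : exists r, 0 < r /\ forall y, d x y < r -> forall n, Prel L (Nat.iter n g y) (Nat.iter n g x).
Proof.
  apply NNPP; intro Hn.
  assert (Hb : forall r, 0 < r -> exists y, d x y < r /\ exists n, ~ Prel L (Nat.iter n g y) (Nat.iter n g x)).
  { intros r rp; apply NNPP; intro Hc; apply Hn; exists r; split; auto.
    intros y Hy n; apply NNPP; intro Hc2; apply Hc; exists y; split; eauto. }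
  destruct (Hper x) as [q [Hq1 Hqx]].
  set (A := fun n u => (forall j, (j < n)%nat -> Prel L (Nat.iter j g (Nat.iter n ginv u)) (Nat.iter j g (Nat.iter n ginv x)))
     /\ exists t, (t < q)%nat /\ ~ Prel L (Nat.iter t g u) (Nat.iter t g x)).
  destruct (compact_nested A) as [u Hu].
  - intro n. apply clopen_and.
    + apply (clopen_forall_lt X n (fun j u => Prel L (Nat.iter j g (Nat.iter n ginv u)) (Nat.iter j g (Nat.iter n ginv x)))).
      intro j. apply (clopen_pre X (fun u => Nat.iter j g (Nat.iter n ginv u)) (fun z => Prel L z _)).
      * apply continuous_comp; apply continuous_iter; auto.
      * apply Prel_clopen; auto.
    + apply (clopen_exists_lt X q (fun t u => ~ Prel L (Nat.iter t g u) (Nat.iter t g x))).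
      intro t. apply clopen_not. apply (clopen_pre X (Nat.iter t g) (fun z => Prel L z _)).
      apply continuous_iter; auto. apply Prel_clopen; auto.
  - intros n v [H1 H2]; split; auto. intros j Hj.
    rewrite <- !(iter_shift j n). apply H1; lia.
  - intro n. set (L0 := (n + q)%nat).
    assert (Wc : clopen X (fun y => forall j, (j < S L0)%nat -> Prel L (Nat.iter j g y) (Nat.iter j g x))).
    { apply (clopen_forall_lt X (S L0) (fun j y => Prel L (Nat.iter j g y) (Nat.iter j g x))).
      intro j; apply (clopen_pre X (Nat.iter j g) (fun z => Prel L z _)).
      apply continuous_iter; auto. apply Prel_clopen; auto. }
    destruct (proj1 Wc x) as [r [rp Hr]]. { intros; apply Prel_refl. }
    destruct (Hb r rp) as [y [Hy Hex]].
    destruct (least_nat _ Hex) as [i [Hi Hmin]].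
    assert (iL : (L0 < i)%nat).
    { destruct (Nat.lt_ge_cases L0 i); auto. exfalso; apply Hi; apply (Hr y Hy); lia. }
    pose proof (Nat.div_mod_eq i q) as Hdm. pose proof (Nat.mod_upper_bound i q ltac:(lia)) as Hmu.
    set (s := (q * (i / q))%nat) in *. set (t := (i mod q)%nat) in *.
    assert (Hsx : Nat.iter s g x = x) by (apply iter_period; auto).
    assert (Ex : Nat.iter n ginv x = Nat.iter (s - n) g x).
    { rewrite <- (iter_inv2 n (s-n) x). f_equal. replace (n + (s-n))%nat with s by lia. auto. }
    assert (Ey : Nat.iter n ginv (Nat.iter s g y) = Nat.iter (s - n) g y).
    { rewrite <- (iter_inv2 n (s-n) y). replace (n + (s-n))%nat with s by lia. auto. }
    exists (Nat.iter s g y). split.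
    + intros j Hj. rewrite Ex, Ey. rewrite <- !Nat.iter_add. apply NNPP; apply Hmin. lia.
    + exists t; split; auto. assert (Et : Nat.iter t g x = Nat.iter t g (Nat.iter s g x)) by (rewrite Hsx; auto).
      rewrite Et. rewrite <- !Nat.iter_add.
      replace (t + s)%nat with i by lia. auto.
  - destruct (Hper u) as [p [Hp1 Hpu]].
    destruct (Hu (p * q)%nat) as [H1 [t [Ht Hnt]]].
    apply Hnt. specialize (H1 t ltac:(nia)).
    assert (E1 : Nat.iter (p * q) ginv u = u).
    { transitivity (Nat.iter (p*q) ginv (Nat.iter (p*q) g u)); [|apply iter_inv].
      f_equal. symmetry. apply iter_period; auto. }
    assert (E2 : Nat.iter (p * q) ginv x = x).
    { transitivity (Nat.iter (p*q) ginv (Nat.iter (p*q) g x)); [|apply iter_inv].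
      f_equal. symmetry. rewrite Nat.mul_comm. apply iter_period; auto. }
    rewrite E1, E2 in H1; exact H1.
Qed.

End OneSide.

Section Dyn.
Variables (f finv : X -> X).
Hypotheses (Hhomeo : is_homeomorphism f finv) (Hdim : @dim_zero X)
  (Hper : forall x : X, periodic_point f x).

Definition Rel L a b := forall n, Prel L (Nat.iter n f a) (Nat.iter n f b) /\
  Prel L (Nat.iter n finv a) (Nat.iter n finv b).

Lemma Rel_refl L a : Rel L a a. Proof. intro n; split; apply Prel_refl. Qed.
Lemma Rel_sym L a b : Rel L a b -> Rel L b a.
Proof. intros H n; destruct (H n); split; apply Prel_sym; auto. Qed.
Lemma Rel_trans L a b c : Rel L a b -> Rel L b c -> Rel L a c.
Proof. intros H1 H2 n; destruct (H1 n), (H2 n); split; eapply Prel_trans; eauto. Qed.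

Lemma Rel_f L a b : Rel L a b -> Rel L (f a) (f b).
Proof. destruct Hhomeo as [_ [_ [Hfi Hif]]].
  intros H n; split.
  - rewrite <- !Nat.iter_succ_r. apply (H (S n)).
  - destruct n. apply (H 1%nat). rewrite !Nat.iter_succ_r, !Hfi. apply (H n).
Qed.

Lemma Rel_finv L a b : Rel L a b -> Rel L (finv a) (finv b).
Proof. destruct Hhomeo as [_ [_ [Hfi Hif]]].
  intros H n; split.
  - destruct n. apply (H 1%nat). rewrite !Nat.iter_succ_r, !Hif. apply (H n).
  - rewrite <- !Nat.iter_succ_r. apply (H (S n)).
Qed.

Lemma finv_per x : periodic_point finv x.
Proof. destruct Hhomeo as [_ [_ [Hfi Hif]]]. destruct (Hper x) as [q [Hq Hx]].
  exists q; split; auto. transitivity (Nat.iter q finv (Nat.iter q f x)).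
  rewrite Hx; auto. apply (iter_inv f finv Hfi). Qed.

Lemma main_rel eta : 0 < eta -> exists L, (forall a b, Rel L a b -> d a b < eta) /\
  exists de, 0 < de /\ forall a b, d a b <= de -> Rel L a b.
Proof. intro ep. destruct Hhomeo as [Hf [Hfv [Hfi Hif]]].
  destruct (cover_exists Hdim eta ep) as [L [HLc [HLcov HLd]]].
  exists L; split.
  { intros a b H. destruct (H 0%nat) as [H0 _]. simpl in H0.
    destruct (HLcov a) as [U [HU Ua]]. apply (HLd U HU); auto. apply (H0 U HU); auto. }
  assert (Pw : forall x, exists r, 0 < r /\ forall y, d x y < r -> Rel L x y).
  { intro x. destruct (one_side f finv Hf Hfv Hfi Hif Hper L HLc x) as [r1 [p1 H1]].
    destruct (one_side finv f Hfv Hf Hif Hfi finv_per L HLc x) as [r2 [p2 H2]].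
    exists (Rmin r1 r2); split. apply Rmin_glb_lt; auto.
    intros y Hy n. assert (d x y < r1) by (eapply Rlt_le_trans; [exact Hy| apply Rmin_l]).
    assert (d x y < r2) by (eapply Rlt_le_trans; [exact Hy| apply Rmin_r]).
    split; apply Prel_sym; auto. }
  set (J := {p : X * R | 0 < snd p /\ forall y, d (fst p) y < snd p -> Rel L (fst p) y}).
  destruct (Hcomp J (fun j z => d (fst (proj1_sig j)) z < snd (proj1_sig j) / 2)) as [l Hl].
  - intro j. apply ball_open.
  - intro x. destruct (Pw x) as [r [rp Hr]].
    exists (exist _ (x, r) (conj rp Hr)). simpl. rewrite dist_refl. lra.
  - destruct (list_min_pos (fun j : J => snd (proj1_sig j) / 4) l) as [s [sp Hs]].
    { intros [[c r] [rp Hr]] _; simpl in *; lra. }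
    exists s; split; auto. intros a b Hab.
    destruct (Hl a) as [[[c r] [rp Hr]] [Hin Ha]]. specialize (Hs _ Hin). simpl in *.
    apply Rel_trans with c. apply Rel_sym, Hr; simpl; lra.
    apply Hr; simpl. pose proof (Defs.dist_triangle X c a b). lra.
Qed.


Lemma Rel_iter_f L n a b : Rel L a b -> Rel L (Nat.iter n f a) (Nat.iter n f b).
Proof. intro H; induction n; auto. rewrite !Nat.iter_succ. apply Rel_f; auto. Qed.
Lemma Rel_iter_finv L n a b : Rel L a b -> Rel L (Nat.iter n finv a) (Nat.iter n finv b).
Proof. intro H; induction n; auto. rewrite !Nat.iter_succ. apply Rel_finv; auto. Qed.

Lemma equi : equicontinuous f finv.
Proof. intros eps ep. destruct (main_rel eps ep) as [L [HR [de [dp Hde]]]].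
  exists de; split; auto. intros a b Hab i. apply Rlt_le. specialize (Hde a b Hab).
  destruct i; simpl.
  - apply HR; auto.
  - apply HR. apply Rel_iter_f; auto.
  - apply HR. apply Rel_iter_finv; auto.
Qed.

Lemma rho_exists z : exists rho, 0 < rho /\ forall k, d (Nat.iter k f z) z < rho -> Nat.iter k f z = z.
Proof. destruct (Hper z) as [q [Hq Hz]].
  assert (G : forall N, exists rho, 0 < rho /\ forall j, (j < N)%nat -> d (Nat.iter j f z) z < rho -> Nat.iter j f z = z).
  { induction N.
    - exists 1; split; [lra| intros; lia].
    - destruct IHN as [r [rp Hr]].
      destruct (classic (Nat.iter N f z = z)) as [E|E].
      + exists r; split; auto. intros j Hj Hd. destruct (Nat.eq_dec j N); [subst; auto| apply Hr; auto; lia].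
      + assert (dp : 0 < d (Nat.iter N f z) z).
        { destruct (Defs.dist_nonneg X (Nat.iter N f z) z) as [h|h]; auto.
          exfalso; apply E; apply (Defs.dist_zero X); auto. }
        exists (Rmin r (d (Nat.iter N f z) z)); split. apply Rmin_glb_lt; auto.
        intros j Hj Hd. destruct (Nat.eq_dec j N).
        * subst. exfalso. pose proof (Rmin_r r (d (Nat.iter N f z) z)). lra.
        * apply Hr. lia. eapply Rlt_le_trans; [exact Hd| apply Rmin_l]. }
  destruct (G q) as [r [rp Hr]]. exists r; split; auto. intros k Hk.
  pose proof (Nat.div_mod_eq k q) as Hdm. pose proof (Nat.mod_upper_bound k q ltac:(lia)) as Hmu.
  assert (E : Nat.iter k f z = Nat.iter (k mod q) f z).
  { transitivity (Nat.iter (k mod q + q * (k / q)) f z). f_equal; lia.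
    rewrite Nat.iter_add, (iter_period f q z (k / q) Hz). auto. }
  rewrite E in *. apply Hr; auto.
Qed.

Lemma shadow : strict_periodic_shadowing f.
Proof. intros eps ep.
  assert (Pw : forall z, exists s, 0 < s /\ forall y, d z y < s -> forall m, d (Nat.iter m f y) y < s ->
     Nat.iter m f z = z /\ forall n, d (Nat.iter n f z) (Nat.iter n f y) < eps / 2).
  { intro z. destruct (rho_exists z) as [rho [rp Hrho]].
    assert (hp : 0 < Rmin (rho/3) (eps/2)) by (apply Rmin_glb_lt; lra).
    destruct (main_rel _ hp) as [L [HR [de [dp Hde]]]].
    exists (Rmin de (rho/3)); split. apply Rmin_glb_lt; lra.
    intros y Hy m Hm.
    pose proof (Rmin_l de (rho/3)). pose proof (Rmin_r de (rho/3)).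
    pose proof (Rmin_l (rho/3) (eps/2)). pose proof (Rmin_r (rho/3) (eps/2)).
    assert (Rzy : Rel L z y) by (apply Hde; lra).
    split.
    - apply Hrho. pose proof (HR _ _ (Rel_iter_f L m z y Rzy)).
      pose proof (Defs.dist_triangle X (Nat.iter m f z) (Nat.iter m f y) z).
      pose proof (Defs.dist_triangle X (Nat.iter m f y) y z) as T2.
      rewrite (Defs.dist_sym X y z) in T2. lra.
    - intro n. pose proof (HR _ _ (Rel_iter_f L n z y Rzy)). lra. }
  set (K := {p : X * R | 0 < snd p /\ forall y, d (fst p) y < snd p -> forall m, d (Nat.iter m f y) y < snd p ->
     Nat.iter m f (fst p) = fst p /\ forall n, d (Nat.iter n f (fst p)) (Nat.iter n f y) < eps / 2}).
  destruct (Hcomp K (fun j y => d (fst (proj1_sig j)) y < snd (proj1_sig j))) as [l Hl].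
  - intro j; apply ball_open.
  - intro x. destruct (Pw x) as [s [sp Hs]]. exists (exist _ (x, s) (conj sp Hs)). simpl.
    rewrite dist_refl; auto.
  - destruct (list_min_pos (fun j : K => snd (proj1_sig j)) l) as [sg [sgp Hsg]].
    { intros [[c r] [rp Hr]] _; simpl in *; lra. }
    assert (hp : 0 < Rmin sg (eps/2)) by (apply Rmin_glb_lt; lra).
    destruct (main_rel _ hp) as [L [HR [de [dp Hde]]]].
    pose proof (Rmin_l sg (eps/2)). pose proof (Rmin_r sg (eps/2)).
    exists de; split; auto. intros xs m Hm Hstep Hcyc.
    assert (Cl : forall i, (i <= m)%nat -> Rel L (Nat.iter i f (xs 0%nat)) (xs i)).
    { induction i; intro Hi. apply Rel_refl.
      apply Rel_trans with (f (xs i)). rewrite Nat.iter_succ. apply Rel_f. apply IHi; lia.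
      apply Hde. apply Hstep; lia. }
    destruct (Hl (xs 0%nat)) as [[[c r] [rp Hr]] [Hin Ha]]. specialize (Hsg _ Hin). simpl in *.
    assert (Hm0 : d (Nat.iter m f (xs 0%nat)) (xs 0%nat) < r).
    { pose proof (HR _ _ (Cl m (le_n _))) as T1. rewrite <- Hcyc in T1. lra. }
    destruct (Hr (xs 0%nat) Ha m Hm0) as [Hfix Hclose].
    exists c; split; auto. intros i Hi.
    pose proof (HR _ _ (Cl i Hi)). specialize (Hclose i).
    pose proof (Defs.dist_triangle X (xs i) (Nat.iter i f (xs 0%nat)) (Nat.iter i f c)) as T3.
    rewrite (Defs.dist_sym X (xs i) (Nat.iter i f (xs 0%nat))) in T3.
    rewrite (Defs.dist_sym X (Nat.iter i f (xs 0%nat)) (Nat.iter i f c)) in T3.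
    lra.
Qed.
End Dyn.
End Main.

Theorem proposition1p1 (X : MetricSpace) (f finv : X -> X)
  (Hcomp : @compact_space X)
  (Hhomeo : is_homeomorphism f finv)
  (Hdim : @dim_zero X)
  (Hper : forall x : X, periodic_point f x) :
  equicontinuous f finv /\ strict_periodic_shadowing f.
Proof.
  split; [apply (equi X Hcomp f finv Hhomeo Hdim Hper) | apply (shadow X Hcomp f finv Hhomeo Hdim Hper)].
Qed.
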